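(* Let $\mathcal{A}$ be a complex Banach algebra with unity and let $a\in\mathcal{A}$. If $x\in\mathcal{A}$ is a g$\pi$-Hirano inverse of $a$, then $a$ is generalized Drazin invertible and its generalized Drazin inverse is $a^{d}=x$.
   Context: An element $q\in\mathcal{A}$ is quasinilpotent if its spectrum is $\sigma(q)=\{0\}$; $\mathcal{A}^{qnil}$ denotes the set of quasinilpotent elements. An element $x\in\mathcal{A}$ is a generalized Drazin inverse of $a$ if $xax=x$, $ax=xa$ and $a-a^{2}x\in\mathcal{A}^{qnil}$; it is unique when it exists and is denoted $a^{d}$. An element $x\in\mathcal{A}$ is a g$\pi$-Hirano inverse of $a$ if $xax=x$, $ax=xa$ and $a-a^{n+2}x\in\mathcal{A}^{qnil}$ for some positive integer $n$. *)

(* Defs.v *)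
From HB Require Import structures.
From mathcomp Require Import all_boot all_order all_algebra.
From mathcomp Require Import classical_sets.
From mathcomp Require Import complex.
Set Implicit Arguments. Unset Strict Implicit. Unset Printing Implicit Defensive.
Import Order.TTheory GRing.Theory Num.Theory.
Local Open Scope classical_set_scope.
Local Open Scope ring_scope.

(* The norm is an explicit operation (mathcomp-analysis has no
   normed-ring structure and HB forbids joining its normed modules with
   GRing.UnitRing), with all the usual axioms: a norm on the K-vector space A,
   submultiplicative, with ||1|| = 1, and A complete for it (every Cauchy
   sequence converges). *)
HB.mixin Record isBanachAlgebra (K : numFieldType) (A : Type)
  of GRing.UnitAlgebra K A := {
  bnorm : A -> K ;
  bnorm_ge0 : forall x : A, 0 <= bnorm x ;
  bnorm_eq0 : forall x : A, bnorm x = 0 -> x = 0 ;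
  bnormZ : forall (k : K) (x : A), bnorm (k *: x) = `|k| * bnorm x ;
  bnormD : forall x y : A, bnorm (x + y) <= bnorm x + bnorm y ;
  bnormM : forall x y : A, bnorm (x * y) <= bnorm x * bnorm y ;
  bnorm1 : bnorm 1 = 1 ;
  bcomplete : forall u : nat -> A,
    (forall e : K, 0 < e -> exists N : nat, forall m n : nat,
        (N <= m)%N -> (N <= n)%N -> bnorm (u m - u n) < e) ->
    exists l : A, forall e : K, 0 < e -> exists N : nat, forall n : nat,
        (N <= n)%N -> bnorm (u n - l) < e
}.

#[short(type="banachAlgType")]
HB.structure Definition BanachAlgebra (K : numFieldType) :=
  { A of isBanachAlgebra K A & GRing.UnitAlgebra K A }.

Section Defs.
Variables (K : numFieldType) (A : banachAlgType K).

Definition spectrum (a : A) : set K := [set l | ~ (l%:A - a \is a GRing.unit)].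

Definition quasinilpotent (q : A) : Prop := spectrum q = [set 0].

Definition is_gdrazin_inverse (a x : A) : Prop :=
  [/\ x * a * x = x, a * x = x * a & quasinilpotent (a - a ^+ 2 * x)].

Definition gdrazin_invertible (a : A) : Prop := exists x, is_gdrazin_inverse a x.

Definition is_gpi_hirano_inverse (a x : A) : Prop :=
  [/\ x * a * x = x, a * x = x * a &
      exists n : nat, (0 < n)%N /\ quasinilpotent (a - a ^+ (n + 2) * x)].
End Defs.

(* Main.v *)
Require Import Defs.
From HB Require Import structures.
From mathcomp Require Import all_boot all_order all_algebra.
From mathcomp Require Import classical_sets reals.
From mathcomp Require Import complex.
Import Order.TTheory GRing.Theory Num.Theory.
Local Open Scope ring_scope.
Lemma inv_aux (R : ringType) (t u L m p : R) : t * u= 1 -> p * p= p -> u * p= p * u ->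
  L * m = 1 -> m * p = p * m ->
  (t * (1-p) + L * p)  *  (u * (1-p) + m * p) = 1.
Proof.
move=> tu pp up Lm mp.
have pP : p * (1-p) = 0 by rewrite mulrBr mulr1 pp subrr.
have Pp : (1-p) * p = 0 by rewrite mulrBl mul1r pp subrr.
have PP : (1-p) * (1-p) = 1-p by rewrite mulrBr mulr1 Pp subr0.
have cPu : (1-p) * u = u * (1-p) by rewrite mulrBl mulrBr mul1r mulr1 up.
have cPm : (1-p) * m = m * (1-p) by rewrite mulrBl mulrBr mul1r mulr1 mp.
rewrite mulrDl (mulrDr (t * (1-p))) (mulrDr (L * p)) !mulrA.
have h1 : t * (1-p) * u * (1-p) = 1-p by rewrite -(mulrA t) cPu mulrA tu mul1r PP.
have h2 : t * (1-p) * m * p = 0.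
  by rewrite -!mulrA (mulrA (1-p) m) cPm -mulrA Pp !mulr0.
have h3 : L * p * u * (1-p) = 0.
  by rewrite -!mulrA (mulrA p u) -up -mulrA pP !mulr0.
have h4 : L * p * m * p = p.
  by rewrite -!mulrA mp (mulrA p p) pp -mp mulrA Lm mul1r.
by rewrite h1 h2 h3 h4 addr0 add0r subrK.
Qed.

Lemma qnil_proj (K : numFieldType) (A : banachAlgType K) (q p : A) :
  p * p = p -> q * p = p * q -> quasinilpotent q -> quasinilpotent (q * (1 - p)).
Proof.
move=> pp qp Hq.
have Hs l : (~ (l%:A - q \is a GRing.unit)) <-> l = 0.
  by have := congr1 (fun S => S l) Hq; rewrite /spectrum /= => ->.
have p1p' : (1 - p) * p = 0 by rewrite mulrBl mul1r pp subrr.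
rewrite /quasinilpotent /spectrum; apply/seteqP; split => l /=.
  move=> Hn; apply/eqP; apply/negP => /negP l0; apply: Hn.
  have : l%:A - q \is a GRing.unit.
    by case: (boolP (l%:A - q \is a GRing.unit)) => // /negP /(proj1 (Hs l)) /eqP; rewrite (negPf l0).
  move=> /[dup] uu /unitrP [u [u1 u2]].
  have e : (l%:A - q) * p = p * (l%:A - q).
    by rewrite mulrBl mulrBr qp -scalerAl -scalerAr mul1r mulr1.
  have up : u * p = p * u.
    by rewrite -[u * p]mulr1 -u2 mulrA -(mulrA u p) -e mulrA u1 mul1r.
  have Lm : l%:A * l^-1%:A = 1 :> A.
    by rewrite mulr_algl scalerA divff // scale1r.
  have mL : l^-1%:A * l%:A = 1 :> A.
    by rewrite mulr_algl scalerA mulVf // scale1r.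
  have mp : l^-1%:A * p = p * l^-1%:A by rewrite mulr_algl mulr_algr.
  have Lp : l%:A * p = p * l%:A by rewrite mulr_algl mulr_algr.
  have E : l%:A - q * (1 - p) = (l%:A - q) * (1 - p) + l%:A * p.
    by rewrite mulrBr mulr1 !mulrBl !mulrBr !mulr1 ?mul1r addrAC subrK.
  apply/unitrP; exists (u * (1 - p) + l^-1%:A * p); rewrite E; split.
  - exact: inv_aux.
  - exact: inv_aux.
move=> ->; rewrite scale0r sub0r unitrN => uq.
have : p = 0.
  by rewrite -[p]mul1r -(mulVr uq) -mulrA -(mulrA q) p1p' !mulr0.
move=> p0; move: uq; rewrite p0 subr0 mulr1 => uq.
by have := (proj2 (Hs 0) erefl); rewrite scale0r sub0r unitrN.
Qed.

Theorem proposition2p1 (R : realType) (A : banachAlgType R[i]) (a x : A) :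
  is_gpi_hirano_inverse a x ->
  gdrazin_invertible a /\ is_gdrazin_inverse a x.
Proof.
case=> xax ax [n [n0 Hq]].
suff H : is_gdrazin_inverse a x by split => //; exists x.
split => //.
set p := a * x.
have cax : GRing.comm a x by [].
have cxa : GRing.comm x a by [].
have cpa : GRing.comm p a := commr_sym (commrM (commr_refl a) cax).
have cpx : GRing.comm p x := commr_sym (commrM cxa (commr_refl x)).
have pp : p * p = p by rewrite /p mulrA -(mulrA a x a) -(mulrA a) xax.
have cpq : GRing.comm p (a - a ^+ (n + 2) * x).
  exact: commrB cpa (commrM (commrX _ cpa) cpx).
have -> : a - a ^+ 2 * x = (a - a ^+ (n + 2) * x) * (1 - p).
  rewrite mulrBr mulr1 mulrBl /p -(mulrA (a ^+ (n + 2))) (mulrA x a x) xax.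
  by rewrite opprB addrA subrK expr2 mulrA.
exact: (@qnil_proj _ _ _ p pp (esym cpq) Hq).
Qed.
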